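(* Let $k$ be a field with algebraic closure $\bar k$, $n\ge1$, $a_0,\ldots,a_{n-1}\in k$ with $a_0=0$, and $L(y)=y^{(n)}+\sum_{i=0}^{n-1}a_iy^{(i)}$. Let $\alpha_1,\ldots,\alpha_r\in\bar k$ be the distinct roots of $\lambda^n+\sum_{i=0}^{n-1}a_i\lambda^i$, with multiplicities $m_1+1,\ldots,m_r+1$ (so exactly one $\alpha_i$ equals $0$). Put $z_{j,t}=x^{[j]}e^{\alpha_tx}\in H\bar k$ for $1\le t\le r$, $0\le j\le m_t$, and $Z=(z_{0,1},\ldots,z_{m_1,1},\ldots,z_{0,r},\ldots,z_{m_r,r})$. Let $V=\{y\in Hk\mid L(y)=0\}$, let $y_1,\ldots,y_n$ be a $k$-basis of $V$, $Y=(y_1,\ldots,y_n)$, and let $T\in GL(n,\bar k)$ satisfy $YT=Z$. Let $u_t\in M(m_t+1,\bar k)$ be the nilpotent matrix with $1$'s on the superdiagonal and $0$ elsewhere ($u_t=0$ if $m_t=0$). Define $\Gamma_t=C_{\bar k}(u_t)\cap U(m_t+1,\bar k)$ if $\alpha_t=0$, and $\Gamma_t=C_{\bar k}(u_t)$ if $\alpha_t\neq0$. Then the map $\sigma\mapsto C_\sigma$, defined by $\sigma(Y)=YC_\sigma$, is a group isomorphism $$G(V|k)\;\cong\;GL(n,k)\cap T\,\{\mathrm{diag}(g_1,\ldots,g_r)\mid g_t\in\Gamma_t\}\,T^{-1},$$ where $\mathrm{diag}(g_1,\ldots,g_r)$ denotes the block-diagonal matrix with diagonal blocks $g_1,\l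dots,g_r$.
   Context: For a field $F$, $HF$ is the ring of Hurwitz series: all sequences $(a_n)_{n\in\mathbb N}$ in $F$, with termwise addition and product $(a_n)\cdot(b_n)=(c_n)$, where $c_n=\sum_{j=0}^n\binom{n}{j}a_jb_{n-j}$. It has derivation $\partial(a_0,a_1,\ldots)=(a_1,a_2,\ldots)$, written $y\mapsto y'$, with $y^{(i)}=\partial^iy$; it is applied entrywise to row vectors. $Hk\subseteq H\bar k$ naturally. Elements $c\in F$ are identified with $(c,0,0,\ldots)$. For $\beta\in F$, $e^{\beta x}=(1,\beta,\beta^2,\ldots)$. The divided powers are $x^{[i]}=(\delta^i_n)_{n\in\mathbb N}$. The entries of $Z$ form a $\bar k$-basis of the solution space of $L$ in $H\bar k$, and $Y$ is also such a basis, so $T$ exists. $G(V|k)$ denotes the group of $k$-differential automorphisms of $V$: the $k$-linear bijections $\sigma:V\to V$ with $\sigma(v')=\sigma(v)'$ for all $v\in V$ and $\sigma(c)=c$ for all $c\in k\cap V$. For $A\in M(m,F)$, $C_F(A)=\{T\in GL(m,F)\mid AT=TA\}$. $U(m,F)$ is the group of upper triangular matrices in $GL(m,F)$ with all diagonal entries $1$. *)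

(* Defs.v *)
From HB Require Import structures.
From Stdlib Require Import FunctionalExtensionality.
From mathcomp Require Import all_boot all_order all_algebra.
Set Implicit Arguments. Unset Strict Implicit. Unset Printing Implicit Defensive.
Import Order.TTheory GRing.Theory Num.Theory.
Local Open Scope ring_scope.

Definition hurwitz (F : Type) := nat -> F.

Definition hmul (F : comNzRingType) (a b : hurwitz F) : hurwitz F :=
  fun n => \sum_(j < n.+1) ('C(n, j))%:R * a j * b (n - j)%N.

Definition hderiv (F : Type) (y : hurwitz F) : hurwitz F := fun n => y n.+1.

Definition hconst (F : comNzRingType) (c : F) : hurwitz F :=
  fun n => if n == 0%N then c else 0.

Definition hexp (F : comNzRingType) (beta : F) : hurwitz F := fun n => beta ^+ n.

(* divided powers x^{[i]} = (delta^i_n)_n *)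
Definition hdivpow (F : comNzRingType) (i : nat) : hurwitz F :=
  fun n => if n == i then 1 else 0.

Definition hscale (F : comNzRingType) (c : F) (y : hurwitz F) : hurwitz F :=
  fun n => c * y n.

Lemma hmul_hconst (F : comNzRingType) (c : F) (y : hurwitz F) :
  hmul (hconst c) y = hscale c y.
Proof.
apply: functional_extensionality => n; rewrite /hmul /hscale /hconst.
rewrite big_ord_recl /= bin0 mul1r subn0 big1 ?addr0 // => i _.
by rewrite /bump /= mulr0 mul0r.
Qed.

Definition lcomb (F : comNzRingType) (n : nat) (c : 'I_n -> F)
  (y : 'I_n -> hurwitz F) : hurwitz F :=
  fun p => \sum_(i < n) c i * y i p.

Definition Lop (F : comNzRingType) (n : nat) (a : 'I_n -> F) (y : hurwitz F)
  : hurwitz F :=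
  fun p => iter n (@hderiv F) y p
           + \sum_(i < n) hmul (hconst (a i)) (iter i (@hderiv F) y) p.

Definition inV (F : comNzRingType) (n : nat) (a : 'I_n -> F) (y : hurwitz F) :=
  Lop a y = (fun _ => 0).

(* sigma (a map on HF, only its restriction to V matters) is a
   k-differential automorphism of V, i.e. its restriction to V lies in G(V|k) *)
Definition diffAut (F : comNzRingType) (n : nat) (a : 'I_n -> F)
  (sigma : hurwitz F -> hurwitz F) : Prop :=
  (forall v, inV a v -> inV a (sigma v)) /\
  (forall (c : F) v w, inV a v -> inV a w ->
      sigma (fun p => c * v p + w p) = (fun p => c * sigma v p + sigma w p)) /\
  (forall v w, inV a v -> inV a w -> sigma v = sigma w -> v = w) /\
  (forall w, inV a w -> exists2 v, inV a v & sigma v = w) /\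
  (forall v, inV a v -> sigma (hderiv v) = hderiv (sigma v)) /\
  (forall c : F, inV a (hconst c) -> sigma (hconst c) = hconst c).

Definition ushift (F : comNzRingType) (mt : nat) : 'M[F]_mt.+1 :=
  \matrix_(i, j) ((nat_of_ord j == (nat_of_ord i).+1)%:R).

Definition inGamma (F : fieldType) (alpha_t : F) (mt : nat) (g : 'M[F]_mt.+1) :=
  [/\ g \in unitmx, g *m ushift F mt = ushift F mt *m g &
      (alpha_t = 0 ->
        (forall i j : 'I_mt.+1, (j < i)%N -> g i j = 0) /\
        (forall i : 'I_mt.+1, g i i = 1))].

(* the row Z: index j of 'I_n corresponds (lexicographically) to the pair
   (t, j') with t = tagnat.sig1, j' = tagnat.sig2 *)
Definition Zvec (K : fieldType) (r : nat) (alpha : 'I_r -> K) (m : 'I_r -> nat)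
  (n : nat) (hn : (\sum_(t < r) (m t).+1)%N = n) (j : 'I_n) : hurwitz K :=
  let s := cast_ord (esym hn) j in
  hmul (hdivpow K (tagnat.sig2 s)) (hexp (alpha (tagnat.sig1 s))).

(* Main.v *)
Require Import Defs.
From Stdlib Require Import FunctionalExtensionality ClassicalEpsilon.
From mathcomp Require Import all_boot all_order all_algebra.
From mathcomp Require Import zify ring lra.
Import Order.TTheory GRing.Theory Num.Theory.
Local Open Scope ring_scope.
Set Implicit Arguments. Unset Strict Implicit. Unset Printing Implicit Defensive.
Lemma iter_hderiv (F : Type) i (y : hurwitz F) p :
  iter i (@hderiv F) y p = y (i + p)%N.
Proof.
elim: i p => [//|i IH] p /=; rewrite /hderiv IH; congr y; lia.
Qed.

Lemma LopE (F : comNzRingType) n (a : 'I_n -> F) v p :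
  Lop a v p = v (n + p)%N + \sum_(i < n) a i * v (i + p)%N.
Proof.
rewrite /Lop iter_hderiv; congr (_ + _); apply: eq_bigr => i _.
by rewrite hmul_hconst /hscale iter_hderiv.
Qed.

Lemma inVP (F : comNzRingType) n (a : 'I_n -> F) v :
  inV a v <-> forall p, v (n + p)%N + \sum_(i < n) a i * v (i + p)%N = 0.
Proof.
rewrite /inV; split => [H p|H].
  by rewrite -LopE H.
by apply: functional_extensionality => p; rewrite LopE H.
Qed.

Lemma inV_lin (F : comNzRingType) n (a : 'I_n -> F) c v w :
  inV a v -> inV a w -> inV a (fun p => c * v p + w p).
Proof.
move=> /inVP Hv /inVP Hw; apply/inVP => p.
have H1 := Hv p; have H2 := Hw p.
have -> : \sum_(i < n) a i * (c * v (i + p)%N + w (i + p)%N) =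
  c * (\sum_(i < n) a i * v (i + p)%N) + \sum_(i < n) a i * w (i + p)%N.
  rewrite mulr_sumr -big_split /=; apply: eq_bigr => i _; ring.
have -> : c * v (n + p)%N + w (n + p)%N + (c * (\sum_(i < n) a i * v (i + p)%N)
   + \sum_(i < n) a i * w (i + p)%N) =
   c * (v (n + p)%N + \sum_(i < n) a i * v (i + p)%N) +
   (w (n + p)%N + \sum_(i < n) a i * w (i + p)%N) by ring.
by rewrite H1 H2 mulr0 addr0.
Qed.

Lemma inV0 (F : comNzRingType) n (a : 'I_n -> F) : inV a (fun _ => 0).
Proof.
apply/inVP => p; rewrite add0r big1 // => i _; by rewrite mulr0.
Qed.

Lemma inV_deriv (F : comNzRingType) n (a : 'I_n -> F) v :
  inV a v -> inV a (hderiv v).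
Proof.
move=> /inVP H; apply/inVP => p; rewrite /hderiv.
have := H p.+1; rewrite !addnS; by under eq_bigr do rewrite addnS.
Qed.

Lemma inV_zero (F : comNzRingType) n (a : 'I_n -> F) v :
  inV a v -> (forall p, (p < n)%N -> v p = 0) -> forall p, v p = 0.
Proof.
move=> /inVP H H0 p; elim/ltn_ind: p => p IH.
case: (ltnP p n) => [/H0 //|hp].
have := H (p - n)%N; rewrite subnKC // big1 ?addr0 // => i _.
by rewrite IH ?mulr0 //; have := ltn_ord i; lia.
Qed.

Lemma inV_const (F : comNzRingType) n (a : 'I_n -> F) c :
  (forall i : 'I_n, nat_of_ord i = 0%N -> a i = 0) -> (0 < n)%N ->
  inV a (hconst c).
Proof.
move=> ha hn; apply/inVP => p; rewrite /hconst.
have -> : (n + p == 0)%N = false by apply/eqP; lia.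
rewrite add0r big1 // => i _.
case: eqP => [h|]; last by rewrite mulr0.
by rewrite ha ?mul0r //; lia.
Qed.

Lemma inV_sum (F : comNzRingType) n (a : 'I_n -> F) (I : Type) (s : seq I)
  (c : I -> F) (v : I -> hurwitz F) :
  (forall i, inV a (v i)) -> inV a (fun p => \sum_(i <- s) c i * v i p).
Proof.
move=> Hv; elim: s => [|j s IH].
  have -> : (fun p : nat => \sum_(i <- [::]) c i * v i p) = fun _ => 0.
    by apply: functional_extensionality => p; rewrite big_nil.
  exact: inV0.
have -> : (fun p : nat => \sum_(i <- j :: s) c i * v i p) =
  fun p => c j * v j p + (\sum_(i <- s) c i * v i p).
  by apply: functional_extensionality => p; rewrite big_cons.
exact: inV_lin.
Qed.

Lemma sigma0 (F : comNzRingType) n (a : 'I_n -> F) sigma :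
  diffAut a sigma -> sigma (fun _ => 0) = (fun _ => 0).
Proof.
move=> [_ [Hl _]]; have := Hl 1 _ _ (inV0 a) (inV0 a).
have -> : (fun p : nat => 1 * 0 + 0) = (fun _ => 0 : F).
  by apply: functional_extensionality => p; rewrite mulr0 addr0.
move=> H; apply: functional_extensionality => p.
have h := congr1 (fun f => f p) H; rewrite /= mul1r in h.
have : sigma (fun _ => 0) p + 0 = sigma (fun _ => 0) p + sigma (fun _ => 0) p.
  by rewrite addr0 {1}h.
by move/addrI => <-.
Qed.

Lemma sigma_sum (F : comNzRingType) n (a : 'I_n -> F) sigma (I : Type)
  (s : seq I) (c : I -> F) (v : I -> hurwitz F) :
  diffAut a sigma -> (forall i, inV a (v i)) ->
  sigma (fun p => \sum_(i <- s) c i * v i p) =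
  fun p => \sum_(i <- s) c i * sigma (v i) p.
Proof.
move=> Hs Hv; elim: s => [|j s IH].
  have -> : (fun p : nat => \sum_(i <- [::]) c i * v i p) = fun _ => 0.
    by apply: functional_extensionality => p; rewrite big_nil.
  rewrite (sigma0 Hs); apply: functional_extensionality => p; by rewrite big_nil.
have -> : (fun p : nat => \sum_(i <- j :: s) c i * v i p) =
  fun p => c j * v j p + (\sum_(i <- s) c i * v i p).
  by apply: functional_extensionality => p; rewrite big_cons.
have [_ [Hl _]] := Hs.
rewrite Hl //; last exact: inV_sum.
rewrite IH; apply: functional_extensionality => p; by rewrite big_cons.
Qed.

Definition ev (F : Type) n (f : 'I_n -> hurwitz F) p : 'rV[F]_n := \row_i f i p.
Definition evm (F : Type) n (f : 'I_n -> hurwitz F) : 'M[F]_n := \matrix_(p, i) f i p.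

Lemma ev_inj (F : fieldType) n (f : 'I_n -> hurwitz F) : evm f \in unitmx ->
  forall m (X X' : 'M[F]_(n,m)), (forall p, ev f p *m X = ev f p *m X') -> X = X'.
Proof.
move=> U m X X' H.
have E : evm f *m X = evm f *m X'.
  apply/row_matrixP => p; rewrite !row_mul.
  have -> : row p (evm f) = ev f p by apply/rowP => i; rewrite !mxE.
  exact: H.
by rewrite -(mulKmx U X) E mulKmx.
Qed.

Lemma lcomb_ev (F : comNzRingType) n (c : 'I_n -> F) f p :
  lcomb c f p = (ev f p *m \col_i c i) 0 0.
Proof. rewrite /lcomb !mxE; apply: eq_bigr => i _; rewrite !mxE mulrC //. Qed.

Lemma evm_unit (F : fieldType) n (a : 'I_n -> F) (f : 'I_n -> hurwitz F) :
  (forall i, inV a (f i)) ->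
  (forall c, lcomb c f = (fun _ => 0) -> forall i, c i = 0) -> evm f \in unitmx.
Proof.
move=> HV Hf; rewrite -unitmx_tr -row_free_unit; apply: inj_row_free => v Hv.
have L : lcomb (fun i => v 0 i) f = (fun _ => 0).
  apply: functional_extensionality; apply: inV_zero; first exact: inV_sum.
  move=> p hp; have := congr1 (fun M : 'M[F]_(1,n) => M 0 (Ordinal hp)) Hv.
  rewrite !mxE /lcomb => H; rewrite -[X in _ = X]H.
  by apply: eq_bigr => i _; rewrite !mxE.
apply/rowP => i; rewrite mxE; exact: (Hf _ L i).
Qed.

Lemma choose_mat (F : Type) n (P : 'I_n -> ('I_n -> F) -> Prop) (x0 : F) :
  (forall j, exists c, P j c) -> exists M : 'M[F]_n, forall j, P j (fun i => M i j).
Proof.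
move=> H.
pose f j := epsilon (inhabits (fun _ : 'I_n => x0)) (P j).
exists (\matrix_(i, j) f j i) => j.
have -> : (fun i => (\matrix_(i, j) f j i) i j) = f j.
  by apply: functional_extensionality => i; rewrite mxE.
exact: epsilon_spec (H j).
Qed.

Lemma sigma_lcomb (F : comNzRingType) n (a : 'I_n -> F) sigma (c : 'I_n -> F) (y : 'I_n -> hurwitz F) :
  diffAut a sigma -> (forall i, inV a (y i)) ->
  sigma (lcomb c y) = fun p => \sum_(i < n) c i * sigma (y i) p.
Proof. move=> Hs Hy; rewrite /lcomb; exact: (sigma_sum (index_enum _) c Hs Hy). Qed.

Lemma inV_lcomb (F : comNzRingType) n (a : 'I_n -> F) (c : 'I_n -> F) (y : 'I_n -> hurwitz F) :
  (forall i, inV a (y i)) -> inV a (lcomb c y).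
Proof. move=> Hy; rewrite /lcomb; apply: inV_sum. exact: Hy. Qed.

Lemma ushiftE (F : comNzRingType) mt i j :
  ushift F mt i j = (nat_of_ord j == (nat_of_ord i).+1)%:R.
Proof. by rewrite mxE. Qed.

Lemma sum_ind (F : comNzRingType) N c (f : 'I_N.+1 -> F) :
  \sum_(l < N.+1) (nat_of_ord l == c)%:R * f l = if (c < N.+1)%N then f (inord c) else 0.
Proof.
case: ltnP => h.
  rewrite (bigD1 (inord c)) //= inordK // eqxx mul1r big1 ?addr0 // => l hl.
  have -> : (nat_of_ord l == c) = false.
    by apply/negbTE; apply: contra hl => /eqP e; apply/eqP/val_inj; rewrite /= inordK.
  by rewrite mul0r.
rewrite big1 // => l _; have -> : (nat_of_ord l == c) = false.
  by apply/negbTE; have := ltn_ord l; lia.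
by rewrite mul0r.
Qed.

Lemma mul_ushift_l (F : comNzRingType) p q (X : 'M[F]_(p.+1, q)) i j :
  (ushift F p *m X) i j = if (i < p)%N then X (inord i.+1) j else 0.
Proof.
rewrite mxE; under eq_bigr do rewrite ushiftE.
by rewrite sum_ind ltnS.
Qed.

Lemma mul_ushift_r (F : comNzRingType) p q (X : 'M[F]_(p, q.+1)) i j :
  (X *m ushift F q) i j = if (0 < j)%N then X i (inord j.-1) else 0.
Proof.
rewrite mxE; under eq_bigr do rewrite ushiftE mulrC.
case: j => [[|j] hj] /=.
  by rewrite big1 // => l _; rewrite mul0r.
under eq_bigr => l _ do rewrite eqSS eq_sym.
by rewrite sum_ind (ltn_trans _ hj).
Qed.

Lemma rect_zero (F : fieldType) p q (X : 'M[F]_(p.+1, q.+1)) (al be : F) :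
  al != be -> (al%:M + ushift F p) *m X = X *m (be%:M + ushift F q) -> X = 0.
Proof.
move=> hab H.
have E : forall (i : 'I_p.+1) (j : 'I_q.+1),
  (al - be) * X i j = (if (0 < j)%N then X i (inord j.-1) else 0)
                      - (if (i < p)%N then X (inord i.+1) j else 0).
  move=> i j; have := congr1 (fun M : 'M[F]_(p.+1,q.+1) => M i j) H.
  have h1 := mul_ushift_l X i j; have h2 := mul_ushift_r X i j.
  rewrite mxE in h1; rewrite mxE in h2.
  rewrite /= mulmxDl mulmxDr mul_scalar_mx mul_mx_scalar !mxE h1 h2.
  set A := (if _ then _ else _); set B := (if _ then _ else _) => h.
  rewrite mulrBl; have -> : al * X i j = be * X i j + B - A by rewrite -h; ring.
  ring.
have key : forall mu (i : 'I_p.+1) (j : 'I_q.+1), (p - i + j < mu)%N -> X i j = 0.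
  elim=> [//|mu IH] i0 j0 hmu.
  have : (al - be) * X i0 j0 = 0.
    have li := ltn_ord i0; have lj := ltn_ord j0.
    rewrite E; case: ifP => h1; case: ifP => h2; rewrite ?subr0 ?sub0r ?oppr0 //.
    - rewrite (IH i0 (inord j0.-1)); last by rewrite inordK; lia.
      rewrite (IH (inord i0.+1) j0); last by rewrite inordK; lia.
      by rewrite subr0.
    - by rewrite (IH i0 (inord j0.-1)) // inordK; lia.
    - by rewrite (IH (inord i0.+1) j0) ?oppr0 // inordK; lia.
  by move/eqP; rewrite mulf_eq0 subr_eq0 (negbTE hab) /= => /eqP.
apply/matrixP => i j; rewrite mxE; exact: (key (p - i + j).+1).
Qed.

Lemma comm_ushift_unip (F : comNzRingType) mt (g : 'M[F]_mt.+1) :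
  g *m ushift F mt = ushift F mt *m g ->
  (forall i : 'I_mt.+1, g i 0 = (nat_of_ord i == 0)%:R) ->
  (forall i j : 'I_mt.+1, (j < i)%N -> g i j = 0) /\ (forall i, g i i = 1).
Proof.
move=> Hc H0.
have key : forall jn (i j : 'I_mt.+1), nat_of_ord j = jn -> (j <= i)%N ->
    g i j = (nat_of_ord i == nat_of_ord j)%:R.
  elim=> [|jn IH] i j hj hji.
    have -> : j = 0 by apply: val_inj => /=; rewrite hj.
    by rewrite H0.
  have li := ltn_ord i; have lj := ltn_ord j.
  have := congr1 (fun M : 'M[F]_mt.+1 => M (inord i.-1) j) Hc.
  rewrite /= mul_ushift_l mul_ushift_r inordK; last lia.
  have -> : (0 < j)%N by lia.
  have -> : (i.-1 < mt)%N by lia.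
  have -> : inord (i.-1).+1 = i by apply: val_inj; rewrite /= inordK; lia.
  move=> <-; rewrite IH ?inordK //; try lia.
  have -> : (i.-1 == j.-1) = (nat_of_ord i == nat_of_ord j) by apply/eqP/eqP; lia.
  done.
split.
  move=> i j hji; rewrite (key j) //; last lia.
  by have -> : (nat_of_ord i == nat_of_ord j) = false by apply/eqP; lia.
by move=> i; rewrite (key i) // eqxx.
Qed.

Lemma mxblock_Rank (T : Type) r (p_ : 'I_r -> nat)
  (B : forall i j, 'M[T]_(p_ i, p_ j)) t t' i j :
  (mxblock B) (tagnat.Rank t i) (tagnat.Rank t' j) = B t t' i j.
Proof.
have := mxblockK B t t'; move/matrixP/(_ i j); by rewrite /submxblock mxE.
Qed.

Lemma mxdiag_Rank (V : nmodType) r (p_ : 'I_r -> nat)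
  (g : forall i, 'M[V]_(p_ i)) t i j :
  (mxdiag g) (tagnat.Rank t i) (tagnat.Rank t j) = g t i j.
Proof. by rewrite /mxdiag mxblock_Rank eqxx conform_mx_id. Qed.

Lemma mxdiag_Rank_neq (V : nmodType) r (p_ : 'I_r -> nat)
  (g : forall i, 'M[V]_(p_ i)) t t' i j : t != t' ->
  (mxdiag g) (tagnat.Rank t i) (tagnat.Rank t' j) = 0.
Proof. by move=> h; rewrite /mxdiag mxblock_Rank (negbTE h) mxE. Qed.

Lemma mxrow_Rank (T : Type) r (p_ : 'I_r -> nat) mm
  (B : forall i, 'M[T]_(mm, p_ i)) t a i :
  (mxrow B) a (tagnat.Rank t i) = B t a i.
Proof.
have := mxrowK B t; move/matrixP/(_ a i); by rewrite /submxrow mxE.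
Qed.

Lemma mxdiag_mul (R : pzSemiRingType) r (p_ : 'I_r -> nat)
  (g h : forall i, 'M[R]_(p_ i)) :
  mxdiag g *m mxdiag h = mxdiag (fun t => g t *m h t).
Proof.
rewrite {1}/mxdiag mul_mxblock_mxdiag /mxdiag; apply: eq_mxblock => i j.
case: eqVneq => [<-|_]; first by rewrite !conform_mx_id.
by rewrite mul0mx.
Qed.

Lemma comm_mxdiag (F : fieldType) r (m : 'I_r -> nat) (al : 'I_r -> F)
  (Hal : injective al) (G : 'M[F]_(\sum_(t < r) (m t).+1)) :
  G *m mxdiag (fun t => (al t)%:M + ushift F (m t)) =
  mxdiag (fun t => (al t)%:M + ushift F (m t)) *m G ->
  G = mxdiag (fun t => submxblock G t t) /\
  forall t, submxblock G t t *m ushift F (m t) = ushift F (m t) *m submxblock G t t.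
Proof.
move=> H.
set B := fun i j => submxblock G i j.
have eG : mxblock B = G by exact: submxblockK.
have H' : mxblock B *m mxdiag (fun t => (al t)%:M + ushift F (m t)) =
  mxdiag (fun t => (al t)%:M + ushift F (m t)) *m mxblock B by rewrite eG.
rewrite mul_mxblock_mxdiag mul_mxdiag_mxblock in H'.
have Hb : forall i j, B i j *m ((al j)%:M + ushift F (m j)) =
    ((al i)%:M + ushift F (m i)) *m B i j.
  by move=> i j; move/mxblockP: H' => /(_ i j); rewrite !mxblockK.
have off : forall i j, i != j -> B i j = 0.
  move=> i j hij; apply: (@rect_zero F (m i) (m j) _ (al i) (al j)).
    by apply: contra hij => /eqP /Hal ->.
  by rewrite Hb.
split.
  rewrite -{1}eG /mxdiag; apply: eq_mxblock => i j.
  case: eqVneq => [<-|hij]; first by rewrite conform_mx_id.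
  exact: off.
move=> t; have := Hb t t.
rewrite mulmxDr mulmxDl mul_mx_scalar mul_scalar_mx.
by move/addrI.
Qed.

Lemma zE (F : comNzRingType) j (al : F) p :
  hmul (hdivpow F j) (hexp al) p =
  if (j <= p)%N then 'C(p, j)%:R * al ^+ (p - j) else 0.
Proof.
rewrite /hmul /hdivpow /hexp.
transitivity (\sum_(l < p.+1)
    (nat_of_ord l == j)%:R * ('C(p, l)%:R * al ^+ (p - l))).
  apply: eq_bigr => l _.
  by case: (nat_of_ord l == j); rewrite /= ?mulr1 ?mulr0 ?mul1r ?mul0r.
by rewrite sum_ind ltnS; case: ifP => // h; rewrite inordK.
Qed.

Lemma zS (F : comNzRingType) j (al : F) p :
  hmul (hdivpow F j) (hexp al) p.+1 =
  al * hmul (hdivpow F j) (hexp al) p +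
  (if (0 < j)%N then hmul (hdivpow F j.-1) (hexp al) p else 0).
Proof.
rewrite !zE; case: j => [|j] /=.
  by rewrite !bin0 !subn0 exprS addr0; ring.
rewrite ltnS; case: (ltngtP j p) => h.
- rewrite binS natrD.
  have -> : (p - j = (p - j.+1).+1)%N by lia.
  have -> : (p.+1 - j.+1 = (p - j.+1).+1)%N by lia.
  rewrite exprS; ring.
- by rewrite mulr0 addr0.
- subst j; rewrite !binn !subnn.
  by rewrite mulr0 add0r.
Qed.

Lemma block_deriv (F : comNzRingType) mt (al : F) p :
  \row_(i < mt.+1) hmul (hdivpow F i) (hexp al) p *m (al%:M + ushift F mt) =
  \row_(i < mt.+1) hmul (hdivpow F i) (hexp al) p.+1.
Proof.
apply/rowP => j; rewrite mulmxDr mul_mx_scalar mxE mul_ushift_r.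
rewrite [X in X + _]mxE ![_ 0 j]mxE zS; congr (_ + _).
case: ifP => // h; rewrite mxE inordK //; have := ltn_ord j; lia.
Qed.

Lemma ZA (F : comNzRingType) r (m : 'I_r -> nat) (al : 'I_r -> F) p :
  (\row_(s < \sum_(t < r) (m t).+1)
     hmul (hdivpow F (tagnat.sig2 s)) (hexp (al (tagnat.sig1 s))) p)
  *m mxdiag (fun t => (al t)%:M + ushift F (m t)) =
  \row_(s < \sum_(t < r) (m t).+1)
     hmul (hdivpow F (tagnat.sig2 s)) (hexp (al (tagnat.sig1 s))) p.+1.
Proof.
have E : forall p, \row_(s < \sum_(t < r) (m t).+1)
     hmul (hdivpow F (tagnat.sig2 s)) (hexp (al (tagnat.sig1 s))) p =
   mxrow (fun t => \row_(i < (m t).+1) hmul (hdivpow F i) (hexp (al t)) p).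
  by move=> q; apply/matrixP => i s; rewrite !mxE.
rewrite !E mul_mxrow_mxdiag; apply: eq_mxrow => t; exact: block_deriv.
Qed.

Lemma lcomb_col (F : comNzRingType) n q (X : 'M[F]_(n, q)) j (f : 'I_n -> hurwitz F) p :
  lcomb (fun i => X i j) f p = (ev f p *m X) 0 j.
Proof. rewrite /lcomb !mxE; apply: eq_bigr => i _; rewrite !mxE mulrC //. Qed.

Lemma lcomb_1 (F : comNzRingType) n (f : 'I_n -> hurwitz F) j :
  lcomb (fun i => (1%:M : 'M[F]_n) i j) f = f j.
Proof.
by apply: functional_extensionality => p; rewrite lcomb_col mulmx1 mxE.
Qed.

Lemma sigma_mat (F : comNzRingType) n (a : 'I_n -> F) sigma (y : 'I_n -> hurwitz F)
  (C : 'M[F]_n) q (X : 'M[F]_(n, q)) j :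
  diffAut a sigma -> (forall i, inV a (y i)) ->
  (forall j, sigma (y j) = lcomb (fun i => C i j) y) ->
  sigma (lcomb (fun i => X i j) y) = lcomb (fun i => (C *m X) i j) y.
Proof.
move=> Hs Hy HC; rewrite (sigma_lcomb _ Hs Hy).
apply: functional_extensionality => p; rewrite lcomb_col mulmxA mxE.
by apply: eq_bigr => i _; rewrite HC lcomb_col mulrC.
Qed.

Lemma conjM1 (F : fieldType) n (T X Y : 'M[F]_n) : T \in unitmx ->
  (invmx T *m X *m T) *m (invmx T *m Y *m T) = invmx T *m (X *m Y) *m T.
Proof. by move=> U; rewrite !mulmxA mulmxK // -!mulmxA. Qed.

Lemma conjM2 (F : fieldType) n (T X Y : 'M[F]_n) : T \in unitmx ->
  (T *m X *m invmx T) *m (T *m Y *m invmx T) = T *m (X *m Y) *m invmx T.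
Proof. by move=> U; rewrite !mulmxA mulmxKV // -!mulmxA. Qed.

Lemma Rank_ind r (p_ : 'I_r -> nat) (P : 'I_(\sum_(i < r) p_ i) -> Prop) :
  (forall t (i : 'I_(p_ t)), P (tagnat.Rank t i)) -> forall s, P s.
Proof. by move=> H s; rewrite -(tagnat.sig2K s); exact: H. Qed.

Lemma mul_delta (R : pzSemiRingType) m n (A : 'M[R]_(m, n)) i j :
  (A *m delta_mx j (0 : 'I_1)) i 0 = A i j.
Proof. by rewrite -colE mxE. Qed.

Lemma kuniq (F : comNzRingType) n (y : 'I_n -> hurwitz F) :
  (forall c : 'I_n -> F, lcomb c y = (fun _ => 0) -> forall i, c i = 0) ->
  forall c c', lcomb c y = lcomb c' y -> c = c'.
Proof.
move=> Hf c c' H; apply: functional_extensionality => i.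
apply/eqP; rewrite -subr_eq0; apply/eqP.
apply: (Hf (fun i => c i - c' i)); apply: functional_extensionality => p.
have := congr1 (fun f => f p) H; rewrite /lcomb /= => E.
by rewrite -[RHS](subrr (\sum_(i < n) c i * y i p)) {2}E -sumrB;
  apply: eq_bigr => l _; rewrite mulrBl.
Qed.

Lemma Rank_eq0 r (p_ : 'I_r -> nat) t t' (i : 'I_(p_ t)) (j : 'I_(p_ t')) :
  (tagnat.Rank t i == tagnat.Rank t' j) = (t == t') && (nat_of_ord i == nat_of_ord j).
Proof. by rewrite -tagnat.eq_Rank. Qed.

Unset Implicit Arguments. Set Strict Implicit. Set Printing Implicit Defensive.
Theorem mainTheorem9
  (k : fieldType) (K : closedFieldType) (iota : {rmorphism k -> K})
  (* K is an algebraic closure of k (via iota) *)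
  (Kalg : forall x : K, exists2 q : {poly k}, q != 0 & root (map_poly iota q) x)
  (n : nat) (hn1 : (0 < n)%N)
  (a : 'I_n -> k) (ha0 : forall i : 'I_n, nat_of_ord i = 0%N -> a i = 0)
  (r : nat) (alpha : 'I_r -> K) (m : 'I_r -> nat)
  (alpha_inj : injective alpha)
  (hroots : map_poly iota ('X^n + \sum_(i < n) (a i)%:P * 'X^i)
            = \prod_(t < r) ('X - (alpha t)%:P) ^+ (m t).+1)
  (hn : (\sum_(t < r) (m t).+1)%N = n)
  (y : 'I_n -> hurwitz k)
  (yV : forall i, inV a (y i))
  (y_free : forall c : 'I_n -> k, lcomb c y = (fun _ => 0) -> forall i, c i = 0)
  (y_span : forall v, inV a v -> exists c : 'I_n -> k, v = lcomb c y)
  (T : 'M[K]_n) (T_unit : T \in unitmx)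
  (YT_Z : forall j : 'I_n,
      lcomb (fun i => T i j) (fun i p => iota (y i p)) = @Zvec K r alpha m n hn j) :
  let inS (C : 'M[k]_n) :=
    C \in unitmx /\
    exists g : forall t : 'I_r, 'M[K]_((m t).+1),
      (forall t, inGamma (alpha t) (g t)) /\
      map_mx iota C = T *m castmx (hn, hn) (\mxdiag_(t < r) g t) *m invmx T in
  let actsBy (sigma : hurwitz k -> hurwitz k) (C : 'M[k]_n) :=
    forall j : 'I_n, sigma (y j) = lcomb (fun i => C i j) y in
  (* sigma |-> C_sigma is well defined, with values in the target group *)
  (forall sigma, diffAut a sigma ->
     exists C, actsBy sigma C /\ inS C) /\
  (forall sigma C C', actsBy sigma C -> actsBy sigma C' -> C = C') /\
  (* homomorphism *)
  (forall sigma tau C D, diffAut a sigma -> diffAut a tau ->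
     actsBy sigma C -> actsBy tau D -> actsBy (sigma \o tau) (C *m D)) /\
  (* injective (elements of G(V|k) are maps on V) *)
  (forall sigma tau C, diffAut a sigma -> diffAut a tau ->
     actsBy sigma C -> actsBy tau C -> forall v, inV a v -> sigma v = tau v) /\
  (* onto the target group *)
  (forall C, inS C -> exists2 sigma, diffAut a sigma & actsBy sigma C).
Proof.
subst n => inS actsBy.
pose iy := fun i p => iota (y i p).
pose Zr := fun p => \row_(s < \sum_(t < r) (m t).+1)
     hmul (hdivpow K (tagnat.sig2 s)) (hexp (alpha (tagnat.sig1 s))) p.
pose A := mxdiag (fun t => (alpha t)%:M + ushift K (m t)).
have YZ : forall p, Zr p = ev iy p *m T.
  move=> p; apply/rowP => j; rewrite mxE.
  have := congr1 (fun f => f p) (YT_Z j); rewrite /Zvec cast_ord_id /= => <-.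
  by rewrite lcomb_col.
have Munit : evm y \in unitmx by exact: evm_unit yV y_free.
have ev_iota : forall p, ev iy p = map_mx iota (ev y p).
  by move=> p; apply/matrixP => i j; rewrite !mxE.
have Miunit : evm iy \in unitmx.
  have -> : evm iy = map_mx iota (evm y) by apply/matrixP => i j; rewrite !mxE.
  by rewrite map_unitmx.
have [D HD] : exists D : 'M[k]_(\sum_(t < r) (m t).+1),
    forall j, hderiv (y j) = lcomb (fun i => D i j) y.
  apply: (@choose_mat _ _ (fun j c => hderiv (y j) = lcomb c y) 0) => j.
  apply: y_span; exact: inV_deriv.
have evD : forall p, ev y p.+1 = ev y p *m D.
  move=> p; apply/rowP => j; rewrite -lcomb_col -HD mxE //.
have TA : T *m A = map_mx iota D *m T.
  apply: (ev_inj Miunit) => p.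
  rewrite mulmxA -YZ ZA -/(Zr p.+1) YZ !ev_iota evD map_mxM mulmxA //.
have AE : A = invmx T *m map_mx iota D *m T by rewrite -mulmxA -TA mulKmx.
have hc1 : inV a (hconst 1) by exact: inV_const.
have [e He] := y_span _ hc1.
pose Xe : 'cV[k]_(\sum_(t < r) (m t).+1) := \col_i e i.
have HXe : forall p, (ev y p *m Xe) 0 0 = hconst 1 p.
  move=> p; rewrite He -lcomb_col; congr lcomb.
  by apply: functional_extensionality => i; rewrite mxE.
have Tdelta : forall t, alpha t = 0 ->
    T *m delta_mx (tagnat.Rank t (0 : 'I_(m t).+1)) 0 = map_mx iota Xe.
  move=> t ht; apply: (ev_inj Miunit) => p.
  apply/matrixP => i j; rewrite !ord1 mulmxA -YZ. rewrite mul_delta /Zr mxE zE.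
  set s0 := tagnat.Rank _ _.
  have -> : nat_of_ord (tagnat.sig2 s0) = 0%N by rewrite /s0 tagnat.Rank2K.
  rewrite /s0.
  rewrite tagnat.Rank1K ht ev_iota -map_mxM mxE HXe /hconst.
  case: p => [|p] /=; first by rewrite subn0 bin0 expr0 mulr1 (rmorph1 iota).
  by rewrite subn0 expr0n /= mulr0 (rmorph0 iota).

have eXe : lcomb e y = lcomb (fun i => Xe i 0) y.
  by congr lcomb; apply: functional_extensionality => i; rewrite mxE.
split; last split; last split; last split.
- move=> sigma Hs.
  have [Hmap [Hlin [Hinj [Hsurj [Hder Hconst]]]]] := Hs.
  have [C HC] : exists C : 'M[k]_(\sum_(t < r) (m t).+1),
      forall j, sigma (y j) = lcomb (fun i => C i j) y.
    apply: (@choose_mat _ _ (fun j c => sigma (y j) = lcomb c y) 0) => j.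
    apply: y_span; exact: Hmap.
  exists C; split; first exact: HC.
  have [X HX] : exists X : 'M[k]_(\sum_(t < r) (m t).+1),
      forall j, sigma (lcomb (fun i => X i j) y) = y j.
    apply: (@choose_mat _ _ (fun j c => sigma (lcomb c y) = y j) 0) => j.
    have [v hv <-] := Hsurj _ (yV j).
    have [c ->] := y_span v hv; by exists c.
  have CX : C *m X = 1%:M.
    apply: (ev_inj Munit) => p; apply/rowP => j.
    rewrite -!lcomb_col -(sigma_mat _ _ Hs yV HC) HX.
    by rewrite (lcomb_1 y j).
  have Cu : C \in unitmx by case: (mulmx1_unit CX).
  have CD : C *m D = D *m C.
    apply: (ev_inj Munit) => p; apply/rowP => j.
    have := congr1 (fun f => f p) (Hder _ (yV j)).
    rewrite /= (HD j) (sigma_mat _ _ Hs yV HC) lcomb_col => ->.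
    by rewrite /hderiv (HC j) lcomb_col evD mulmxA.
  have CXe : C *m Xe = Xe.
    apply: (ev_inj Munit) => p; apply/matrixP => i0 j0; rewrite !ord1.
    have := Hconst 1 hc1; rewrite He eXe (sigma_mat _ _ Hs yV HC) => E.
    have := congr1 (fun f => f p) E; by rewrite /= !lcomb_col.
  pose G := invmx T *m map_mx iota C *m T.
  have GA : G *m A = A *m G.
    by rewrite AE /G !conjM1 // -!map_mxM CD.
  have [GE Gc] := comm_mxdiag alpha_inj GA.
  have Gu : G \in unitmx.
    by rewrite /G !unitmx_mul unitmx_inv map_unitmx Cu T_unit.
  have GiA : invmx G *m A = A *m invmx G.
    rewrite -{1}(mulmxK Gu (invmx G *m A)) -(mulmxA (invmx G) A G) -GA.
    by rewrite mulmxA mulVmx // mul1mx.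
  have [hE _] := comm_mxdiag alpha_inj GiA.
  rewrite /inS; split => //; exists (fun t => submxblock G t t); split.
    move=> t; split.
    + have : mxdiag (fun t => submxblock G t t) *m
             mxdiag (fun t => submxblock (invmx G) t t) = 1%:M.
        by rewrite -GE -hE mulmxV.
      rewrite mxdiag_mul -(mxdiagZ (p_ := fun t => (m t).+1)).
      move/eq_mxdiagP => /(_ t) /mulmx1_unit [] //.
    + exact: Gc.
    + move=> ht; apply: comm_ushift_unip; first exact: Gc.
      move=> i.
      have GD : G *m delta_mx (tagnat.Rank t (0 : 'I_(m t).+1)) (0 : 'I_1) =
                delta_mx (tagnat.Rank t (0 : 'I_(m t).+1)) 0.
        rewrite /G -mulmxA (Tdelta t ht) -mulmxA -map_mxM CXe -(Tdelta t ht).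
        by rewrite mulKmx.
      have := congr1 (fun M : 'cV_(\sum_(t < r) (m t).+1) =>
                M (tagnat.Rank t i) 0) GD.
      rewrite mul_delta [RHS]mxE Rank_eq0 eqxx /= andbT => <-.
      by rewrite /submxblock mxE.
  by rewrite castmx_id -GE /G !mulmxA mulmxK // mulmxV // mul1mx.
- move=> sigma C C' HC HC'; apply: (ev_inj Munit) => p; apply/rowP => j.
  by rewrite -!lcomb_col -(HC j) -(HC' j).
- move=> sigma tau C D' Hs Ht HC HD' j.
  by rewrite /= (HD' j) (sigma_mat _ _ Hs yV HC).
- move=> sigma tau C Hs Ht HC HCt v hv.
  have [c ->] := y_span v hv.
  rewrite (sigma_lcomb _ Hs yV) (sigma_lcomb _ Ht yV).
  apply: functional_extensionality => p; apply: eq_bigr => i _.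
  by rewrite (HC i) (HCt i).
- move=> C [Cu [g [Hg HC]]].
  rewrite castmx_id in HC.
  pose G := mxdiag g.
  have GA : G *m A = A *m G.
    rewrite /G /A !mxdiag_mul; apply: eq_mxdiag => t.
    have [_ Hc _] := Hg t.
    by rewrite mulmxDr mulmxDl mul_mx_scalar mul_scalar_mx Hc.
  have DE : map_mx iota D = T *m A *m invmx T by rewrite TA mulmxK.
  have CD : C *m D = D *m C.
    apply: (@map_mx_inj _ _ iota); rewrite !map_mxM HC DE !conjM2 //.
    by rewrite GA.
  have [t0 ht0] : exists t0, alpha t0 = 0.
    have := congr1 (fun q => q.[0]) hroots.
    rewrite horner_coef0 coef_map coefD coefXn coef_sum.
    rewrite [X in _ + X]big1; last first.
      move=> i _; rewrite coefCM coefXn.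
      case: eqP => [h|]; last by rewrite mulr0.
      by rewrite ha0 ?mul0r.
    rewrite eq_sym eqn0Ngt hn1 /=.
    rewrite addr0 (rmorph0 iota) horner_prod => /esym /eqP /prodf_eq0 [t _].
    rewrite horner_exp hornerXsubC expf_eq0 /= sub0r oppr_eq0 => /eqP h.
    by exists t.
  have GD : G *m delta_mx (tagnat.Rank t0 (0 : 'I_(m t0).+1)) (0 : 'I_1) =
            delta_mx (tagnat.Rank t0 (0 : 'I_(m t0).+1)) 0.
    apply/matrixP => s j; rewrite ord1 mul_delta; move: s; apply: Rank_ind => t i.
    rewrite [RHS]mxE Rank_eq0 /=.
    case: (eqVneq t t0) => [et|ne]; last first.
      by rewrite /G mxdiag_Rank_neq.
    subst t; rewrite /G mxdiag_Rank eqxx andbT /=.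
    have [_ _ H] := Hg t0; have [Hlow Hdiag] := H ht0.
    case: eqP => [i0|i0].
      by have -> : i = 0 by apply: val_inj. 
    by rewrite Hlow //= lt0n; exact/eqP.
  have CXe : C *m Xe = Xe.
    apply: (@map_mx_inj _ _ iota); rewrite map_mxM HC -(Tdelta t0 ht0).
    by rewrite !mulmxA mulmxKV // -mulmxA GD Tdelta.
  pose co := fun v : hurwitz k => epsilon
    (inhabits (fun _ : 'I_(\sum_(t < r) (m t).+1) => (0 : k)))
    (fun c => v = lcomb c y).
  have coE : forall v, inV a v -> v = lcomb (co v) y.
    move=> v hv; exact: (epsilon_spec _ _ (y_span v hv)).
  have coL : forall c, co (lcomb c y) = c.
    move=> c; apply: (kuniq y_free); symmetry; apply: coE; exact: inV_lcomb.
  pose sg := fun v => lcomb (fun i => (C *m \col_l co v l) i 0) y.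
  have sgE : forall c, sg (lcomb c y) = lcomb (fun i => (C *m \col_l c l) i 0) y.
    by move=> c; rewrite /sg coL.
  have colK : forall M : 'cV[k]_(\sum_(t < r) (m t).+1), \col_l M l 0 = M.
    by move=> M; apply/matrixP => i j; rewrite ord1 mxE.
  have lcE : forall c, lcomb c y = lcomb (fun i => (\col_l c l) i 0) y.
    by move=> c; congr lcomb; apply: functional_extensionality => i; rewrite mxE.
  exists sg.
    split; first by move=> v _; exact: inV_lcomb.
    split.
      move=> c v w hv hw.
      have [cv ->] := y_span v hv; have [cw ->] := y_span w hw.
      have -> : (fun p => c * lcomb cv y p + lcomb cw y p) =
                lcomb (fun i => c * cv i + cw i) y.
        apply: functional_extensionality => p; rewrite /lcomb mulr_sumr -big_split.
        by apply: eq_bigr => i _; rewrite /=; ring.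
      rewrite !sgE; apply: functional_extensionality => p; rewrite !lcomb_col.
      have -> : \col_l (c * cv l + cw l) = c *: \col_l cv l + \col_l cw l.
        by apply/matrixP => i j; rewrite !mxE.
      by rewrite mulmxDr -scalemxAr mulmxDr -scalemxAr [LHS]mxE [X in X + _ = _]mxE.
    split.
      move=> v w hv hw.
      have [cv ->] := y_span v hv; have [cw ->] := y_span w hw.
      rewrite !sgE => E.
      have : C *m \col_l cv l = C *m \col_l cw l.
        apply: (ev_inj Munit) => p; apply/matrixP => i j; rewrite !ord1.
        by rewrite -!lcomb_col E.
      move/(congr1 (mulmx (invmx C))); rewrite !mulKmx // => h.
      congr lcomb; apply: functional_extensionality => i.
      by have := congr1 (fun M : 'cV[k]_(\sum_(t < r) (m t).+1) => M i 0) h; rewrite !mxE.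
    split.
      move=> w hw; have [cw ->] := y_span w hw.
      exists (lcomb (fun i => (invmx C *m \col_l cw l) i 0) y); first exact: inV_lcomb.
      by rewrite sgE colK mulKVmx // -lcE.
    split.
      move=> v hv; have [c ->] := y_span v hv.
      have -> : hderiv (lcomb c y) = lcomb (fun i => (D *m \col_l c l) i 0) y.
        apply: functional_extensionality => p.
        by rewrite /hderiv (lcE c) !lcomb_col evD -mulmxA.
      rewrite sgE colK sgE; apply: functional_extensionality => p.
      by rewrite /hderiv !lcomb_col evD -!mulmxA (mulmxA C D) CD -mulmxA.
    move=> c hc.
    have hcE : hconst c = lcomb (fun i => c * e i) y.
      apply: functional_extensionality => p.
      have -> : hconst c p = c * hconst 1 p by rewrite /hconst; case: eqP; rewrite ?mulr1 ?mulr0.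
      by rewrite He /lcomb mulr_sumr; apply: eq_bigr => i _; rewrite mulrA.
    rewrite hcE sgE.
    have -> : \col_l (c * e l) = c *: Xe by apply/matrixP => i j; rewrite !mxE.
    rewrite -scalemxAr CXe; congr lcomb; apply: functional_extensionality => i.
    by rewrite !mxE.
  move=> j; rewrite -{1}(lcomb_1 y j) sgE; congr lcomb.
  apply: functional_extensionality => i.
  have -> : \col_l (1%:M : 'M[k]_(\sum_(t < r) (m t).+1)) l j = delta_mx j (0 : 'I_1).
    by apply/matrixP => i0 j0; rewrite ord1 !mxE eqxx andbT.
  by rewrite mul_delta.
Qed.
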